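(* Consider smoothed X3C-$k$ or smoothed SC-$k$ on a collection $\mathcal C=\{C_1,\dots,C_n\}$, where each set weight $w_i$ is drawn independently from a distribution with density $f_i:[0,1]\to[0,\phi]$. Then the expected maximum number of iterations of local search (over all initial feasible solutions and all improving sequences) is $O(3^kn^{k+2}\phi)$, with an absolute hidden constant.
   Context: X3C-$k$ (Exact Cover by 3-Sets): given a finite set $\mathcal B$ with $|\mathcal B|=3q$ and a collection $\mathcal C=\{C_1,\dots,C_n\}$ of 3-element subsets of $\mathcal B$ with weights $w_i$, a feasible solution is $S\subseteq\mathcal C$ with $|S|=q$ and $\bigcup_{C_i\in S}C_i=\mathcal B$; its weight $\sum_{C_i\in S}w_i$ is to be maximized; neighbours of $S$ are exact covers obtained by adding or removing at most $k$ sets in total. SC-$k$ (Set Cover): given a collection $\mathcal C=\{C_1,\dots,C_n\}$ of subsets of $\mathcal B$ with weights $w_i$, a feasible solution is $S\subseteq\mathcal C$ with $\bigcup_{C_i\in S}C_i=\mathcal B$; its cost $\sum_{C_i\in S}w_i$ is to be minimized; neighbours are covers obtained by changing membership of at most $k$ sets. A solution is a feasible solution with no strictly better neighbour; local search repeatedly moves to a strictly better neighbour. *)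

(* Defs.v *)
From HB Require Import structures.
From mathcomp Require Import all_boot all_order all_algebra.
From mathcomp Require Import all_classical all_reals all_analysis.
Set Implicit Arguments. Unset Strict Implicit. Unset Printing Implicit Defensive.
Import Order.TTheory GRing.Theory Num.Theory.

Local Open Scope ring_scope.

Inductive problem := X3C | SC.

Section LocalSearch.
Variables (R : realType) (B : finType) (n : nat).

Definition sol_weight (w : 'I_n -> R) (S : {set 'I_n}) : R := \sum_(i in S) w i.

Definition covers (C : 'I_n -> {set B}) (S : {set 'I_n}) : bool :=
  \bigcup_(i in S) C i == [set: B].

(** Feasibility.  X3C: |S| = q (= |B|/3) and S covers B (exact cover, since
    all sets have 3 elements and |B| = 3q).  SC: S covers B. *)
Definition feasible (pb : problem) (q : nat) (C : 'I_n -> {set B})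
  (S : {set 'I_n}) : bool :=
  match pb with
  | X3C => (#|S| == q) && covers C S
  | SC => covers C S
  end.

Definition neighbour pb q C (k : nat) (S S' : {set 'I_n}) : bool :=
  [&& feasible pb q C S, feasible pb q C S' &
      #|(S :\: S') :|: (S' :\: S)| <= k]%N.

Definition better pb (w : 'I_n -> R) (S S' : {set 'I_n}) : bool :=
  match pb with
  | X3C => sol_weight w S < sol_weight w S'
  | SC => sol_weight w S' < sol_weight w S
  end.

Definition improving_run pb q C k w (s : seq {set 'I_n}) : bool :=
  all (feasible pb q C) s &&
  sorted (fun S S' => neighbour pb q C k S S' && better pb w S S') s.

(** Maximum number of iterations of local search over all initial feasible
    solutions and all improving sequences (number of steps = number of
    solutions in the run minus one).  Since runs are strictly improving, their
    solutions are pairwise distinct, so every run has fewer than 2^n steps and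
    the cap [2^n] in the range of the maximum is never binding. *)
Definition max_iterations pb q C k (w : 'I_n -> R) : nat :=
  \max_(t < (2 ^ n).+1 |
        [exists s : t.+1.-tuple {set 'I_n}, improving_run pb q C k w s]) t.

End LocalSearch.

Section Prob.
Local Open Scope classical_set_scope.
Variables (d : measure_display) (T : measurableType d) (R : realType)
  (P : probability T R) (n : nat).

(** Mutual independence of the random variables W_0, ..., W_{n-1}:
    product rule for every family of measurable sets (taking A_i = setT
    recovers every subfamily). *)
Definition mutually_independent (W : 'I_n -> {RV P >-> R}) : Prop :=
  forall A : 'I_n -> set R, (forall i, measurable (A i)) ->
    P (\bigcap_(i in [set: 'I_n]) (W i @^-1` A i)) =
    (\prod_(i < n) P (W i @^-1` A i))%E.

Definition I01 : set R := [set x : R | 0 <= x <= 1].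

Definition has_density_01 (X : {RV P >-> R}) (f : R -> R) (phi : R) : Prop :=
  [/\ measurable_fun I01 f,
      (forall x, I01 x -> 0 <= f x <= phi) &
      forall A : set R, measurable A ->
        P (X @^-1` A) =
        (\int[lebesgue_measure]_(x in A `&` I01) (f x)%:E)%E].

End Prob.

(* Main.v *)
Require Import Defs.
From HB Require Import structures.
From mathcomp Require Import all_boot all_order all_algebra.
From mathcomp Require Import all_classical all_reals all_analysis.
From mathcomp Require Import ring lra measurable_realfun.
Import Order.TTheory GRing.Theory Num.Theory.
Set Implicit Arguments. Unset Strict Implicit. Unset Printing Implicit Defensive.

Module Aux.
Local Open Scope ring_scope.

Section Det.
Variables (R : realType) (n k : nat).

Definition sgn (tau : {ffun 'I_k -> 'I_n * option bool}) (i : 'I_n) : R :=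
  if (i, Some true) \in codom tau then 1
  else if (i, Some false) \in codom tau then -1 else 0.

Definition aw tau (w : 'I_n -> R) := \sum_i sgn tau i * w i.

Lemma sgn_cases tau i : [\/ sgn tau i = 0, sgn tau i = 1 | sgn tau i = -1].
Proof. by rewrite /sgn; case: ifP => _; [constructor 2|case: ifP => _; [constructor 3|constructor 1]]. Qed.

Lemma sol_weight_diff (w : 'I_n -> R) (S1 S2 : {set 'I_n}) :
  sol_weight w S2 - sol_weight w S1 =
  \sum_i (((i \in S2)%:R - (i \in S1)%:R) * w i).
Proof.
rewrite /sol_weight [\sum_(i in S2) _]big_mkcond [\sum_(i in S1) _]big_mkcond /=.
rewrite -sumrB; apply: eq_bigr => i _.
by case: (i \in S2); case: (i \in S1); rewrite /= ?subrr ?mul0r ?subr0 ?mul1r ?sub0r ?mulN1r.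
Qed.

Lemma tau_exists (S1 S2 : {set 'I_n}) : S1 != S2 ->
  (#|(S1 :\: S2) :|: (S2 :\: S1)| <= k)%N ->
  exists tau, forall w, aw tau w = sol_weight w S2 - sol_weight w S1.
Proof.
move=> neq hk.
set D := (S1 :\: S2) :|: (S2 :\: S1).
have [i0 i0D] : exists i0, i0 \in D.
  apply/set0Pn; apply: contra neq => /eqP D0; apply/eqP/setP => i.
  have : i \notin D by rewrite D0 inE.
  by rewrite !inE; case: (i \in S1); case: (i \in S2).
set L := enum D.
pose tau : {ffun 'I_k -> 'I_n * option bool} :=
  [ffun p : 'I_k => (nth i0 L p, Some (nth i0 L p \in S2))].
exists tau => w; rewrite sol_weight_diff /aw; apply: eq_bigr => i _; congr (_ * _).
have nthD p : nth i0 L p \in D.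
  case: (ltnP p (size L)) => hp; first by rewrite -mem_enum mem_nth.
  by rewrite nth_default.
have memT b : ((i, Some b) \in codom tau) = (i \in D) && (b == (i \in S2)).
  apply/codomP/andP => [[p]|[iD /eqP ->]].
    by rewrite ffunE => -[-> ->]; rewrite nthD.
  have hi : (index i L < k)%N.
    apply: leq_trans hk; move: (index_mem i L); rewrite mem_enum iD /L -cardE; exact.
  exists (Ordinal hi); rewrite ffunE /= nth_index ?mem_enum //.
rewrite /sgn !memT.
case iD: (i \in D); move: iD; rewrite !inE;
  case: (i \in S1); case: (i \in S2) => //= _; rewrite ?subrr ?sub0r ?subr0 //.
Qed.

Lemma path_gap (X : Type) (r : X -> X -> bool) (g : X -> R) (e : R) :
  (forall a b, r a b -> g a + e < g b) ->
  forall s x, path r x s -> (0 < size s)%N -> g x + (size s)%:R * e < g (last x s).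
Proof.
move=> hr; elim=> [//|y s IH] x /= /andP[rxy ps] _.
case: s IH ps => [|z s] IH ps /=; first by rewrite mul1r; exact: hr.
have h2 := IH y ps isT; have h1 := hr _ _ rxy; move: h2 => /=.
rewrite -(addn1 (size s).+1) natrD mulrDl mul1r.
set m := (size s).+1%:R * e => h2.
lra.
Qed.

Lemma sw_bound (w : 'I_n -> R) (S : {set 'I_n}) :
  (forall i, 0 <= w i <= 1) -> 0 <= sol_weight w S <= n%:R.
Proof.
move=> hw; apply/andP; split.
  by apply: sumr_ge0 => i _; case/andP: (hw i).
apply: (@le_trans _ _ (\sum_(i in S) (1 : R))).
  by apply: ler_sum => i _; case/andP: (hw i).
rewrite sumr_const ler_nat; apply: leq_trans (max_card _) _; by rewrite card_ord.
Qed.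

Lemma gap_exists (B : finType) pb q (C : 'I_n -> {set B}) (w : 'I_n -> R) (t : nat) :
  (forall i, 0 <= w i <= 1) -> (0 < t)%N -> (t <= max_iterations pb q C k w)%N ->
  exists tau : {ffun 'I_k -> 'I_n * option bool}, 0 < aw tau w <= n%:R / t%:R.
Proof.
move=> hw t0 hmax.
have : [exists t' : 'I_(2 ^ n).+1,
   [exists s : t'.+1.-tuple {set 'I_n}, improving_run pb q C k w s] && (t <= t')%N].
  move: hmax; apply: contraLR; rewrite negb_exists => /forallP H; rewrite -ltnNge.
  apply: (@leq_ltn_trans t.-1); last by rewrite prednK.
  rewrite /max_iterations; apply/bigmax_leqP => t' Pt'.
  by move: (H t'); rewrite Pt' /= -ltnNge => h; rewrite -ltnS prednK.
case/existsP => t' /andP[/existsP[[[|x s'] /= sz] hs] tt'] //.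
move: hs; rewrite /improving_run /= => /andP[_ ps].
set e := n%:R / t%:R.
pose g S := if pb is X3C then sol_weight w S else - sol_weight w S.
pose rel := (fun S S' => neighbour pb q C k S S' && better pb w S S').
have [[S [S' [hr hle]]] | hall] := pselect (exists S S', rel S S' /\ g S' <= g S + e).
  move: hr; rewrite /rel /neighbour => /andP[/and3P[_ _ hk] hb].
  destruct pb; rewrite /g /= in hle; rewrite /better in hb.
  - have neq : S != S' by apply: contraTneq hb => ->; rewrite ltxx.
    have [tau htau] := tau_exists neq hk.
    by exists tau; rewrite htau subr_gt0 hb /=; lra.
  - have neq' : S' != S by apply: contraTneq hb => ->; rewrite ltxx.
    have [tau htau] := @tau_exists S' S neq' ltac:(by rewrite finset.setUC).
    by exists tau; rewrite htau subr_gt0 hb /=; lra.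
have hall' : forall a b, rel a b -> g a + e < g b.
  by move=> a b hab; rewrite ltNge; apply/negP => hle; apply: hall; exists a, b.
have sz' : size s' = t' by apply/eqP.
have := path_gap hall' ps; rewrite sz' => /(_ (leq_trans t0 tt')).
have gb S1 S2 : g S2 <= g S1 + n%:R.
  have := sw_bound S1 hw; have := sw_bound S2 hw; rewrite /g.
  by destruct pb => /= /andP[? ?] /andP[? ?]; lra.
have ten : n%:R <= t'%:R * e.
  rewrite /e mulrA ler_pdivlMr ?ltr0n // mulrC ler_wpM2r // ler_nat; exact: tt'.
move=> h; have := gb x (last x s'); lra.
Qed.

Lemma max_it_le (B : finType) pb q (C : 'I_n -> {set B}) (w : 'I_n -> R) :
  (max_iterations pb q C k w <= 2 ^ n)%N.
Proof. by rewrite /max_iterations; apply/bigmax_leqP => t' _; rewrite -ltnS. Qed.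

End Det.

Section BB.
Local Open Scope classical_set_scope.

Section Prob.
Context d (T : measurableType d) (R : realType) (P : probability T R) (n : nat)
  (W : 'I_n -> {RV P >-> R}) (f : 'I_n -> R -> R) (phi : R).
Hypotheses (indep : mutually_independent W)
  (dens : forall i, has_density_01 (W i) (f i) phi).

Definition pr (B : set T) : R := fine (P B).

Lemma prE B : measurable B -> P B = (pr B)%:E.
Proof. by move=> mB; rewrite /pr fineK // fin_num_measure. Qed.

Lemma pr_ge0 B : 0 <= pr B.
Proof. by rewrite /pr fine_ge0 // measure_ge0. Qed.

Lemma pr_le1 B : measurable B -> pr B <= 1.
Proof. by move=> mB; rewrite -lee_fin -prE // probability_le1. Qed.

Lemma mpre (h : T -> R) (A : set R) : measurable_fun setT h -> measurable A ->
  measurable (h @^-1` A).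
Proof. by move=> mh mA; rewrite -[h @^-1` A]setTI; exact: mh. Qed.

Lemma mW i (A : set R) : measurable A -> measurable (W i @^-1` A).
Proof. exact: measurable_funPTI. Qed.

Lemma I01E : @I01 R = `[(0:R), 1]%classic.
Proof. by rewrite set_itvE. Qed.

Lemma mI01 : measurable (@I01 R).
Proof. by rewrite I01E; exact: measurable_itv. Qed.

Lemma union_bound (I : Type) (s : seq I) (F : I -> set T) :
  (forall i, measurable (F i)) ->
  (P (\big[setU/set0]_(i <- s) F i) <= \sum_(i <- s) P (F i))%E.
Proof.
move=> mF; elim: s => [|a s IH]; first by rewrite !big_nil measure0.
rewrite !big_cons; apply: le_trans (measureU2 _ _ _) _ => //.
  exact: bigsetU_measurable.
exact: leeD2l.
Qed.

Lemma mem_bigsetU (I : eqType) (s : seq I) (F : I -> set T) x :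
  (exists2 i, i \in s & F i x) -> (\big[setU/set0]_(i <- s) F i) x.
Proof.
elim: s => [[i]|a s IH [i]]; first by rewrite in_nil.
rewrite in_cons big_cons => /orP[/eqP <- Fix|his Fix]; first by left.
by right; apply: IH; exists i.
Qed.

Definition bad := \big[setU/set0]_(i <- enum 'I_n) (W i @^-1` (~` @I01 R)).

Lemma mbad : measurable bad.
Proof. by apply: bigsetU_measurable => i _; apply: mW; apply: measurableC; exact: mI01. Qed.

Lemma P_bad : P bad = 0%E.
Proof.
apply/eqP; rewrite eq_le measure_ge0 andbT.
apply: le_trans (union_bound _ _) _.
  by move=> i; apply: mW; apply: measurableC; exact: mI01.
rewrite big1 // => i _.
have [_ _ ->] := dens i; last by apply: measurableC; exact: mI01.
by rewrite setICl integral_set0.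
Qed.

Lemma notbad x : ~ bad x -> forall i, 0 <= W i x <= 1.
Proof.
move=> nb i; apply: contrapT => hi; apply: nb; apply: mem_bigsetU.
by exists i; rewrite ?mem_enum.
Qed.

Lemma phi_ge0 : (0 < n)%N -> 0 <= phi.
Proof.
move=> n0; have [_ h _] := dens (Ordinal n0).
have : @I01 R 0 by rewrite /I01 /= lexx ler01.
by move/h => /andP[]; apply: le_trans.
Qed.

Lemma dens_bound i (A : set R) : measurable A -> 0 <= phi ->
  (P (W i @^-1` A) <= phi%:E * lebesgue_measure A)%E.
Proof.
move=> mA phi0; have [mf hf ->] := dens i => //.
have mAI : measurable (A `&` @I01 R) by apply: measurableI mA mI01.
apply: (@le_trans _ _ (\int[lebesgue_measure]_(x in A `&` @I01 R) phi%:E)%E).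
  apply: ge0_le_integral => //.
  - by move=> x [_ /hf /andP[]]; rewrite lee_fin.
  - apply/measurable_EFinP; apply: measurable_funS mf => //; exact: mI01.
  - by move=> x [_ /hf /andP[]]; rewrite lee_fin.
rewrite integral_cst //.
apply: lee_wpmul2l; first by rewrite lee_fin.
by apply: le_measure; rewrite ?inE //; exact: subIsetl.
Qed.

Definition Ev (k : nat) (tau : {ffun 'I_k -> 'I_n * option bool}) (e : R) :=
  [set x | 0 < aw tau (fun i => W i x) <= e].

Lemma mEv k tau e : measurable (@Ev k tau e).
Proof.
have mh : measurable_fun setT (fun x => aw tau (fun i => W i x)).
  apply: measurable_sum => i; apply: measurable_funM => //; exact: measurable_funPT.
have -> : @Ev k tau e = (fun x => aw tau (fun i => W i x)) @^-1` `]0, e]%classic.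
  by apply/seteqP; split => x /=; rewrite in_itv.
exact: mpre mh (measurable_itv _).
Qed.

Section Grid.
Variables (k : nat) (tau : {ffun 'I_k -> 'I_n * option bool}) (e : R) (j : 'I_n).
Hypotheses (e0 : 0 < e) (hj : sgn R tau j != 0).

Definition dl := e / (2 * n%:R).
Definition Mb := Num.bound (dl^-1).
Definition idx (y : R) : 'I_Mb.+1 := inord (Num.truncn (y / dl)).
Definition cell (m : nat) : set R := `[m%:R * dl, m.+1%:R * dl[%classic.
Definition Yg (g : {ffun 'I_n -> 'I_Mb.+1}) :=
  \sum_(i | i != j) sgn R tau i * ((g i)%:R * dl).
Definition cL (g : {ffun 'I_n -> 'I_Mb.+1}) := - Yg g - e / 2.
Definition cc (g : {ffun 'I_n -> 'I_Mb.+1}) := if sgn R tau j == 1 then cL g else - cL g - 2 * e.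
Definition Jg (g : {ffun 'I_n -> 'I_Mb.+1}) := `[cc g, cc g + 2 * e]%classic.
Definition Ag (g : {ffun 'I_n -> 'I_Mb.+1}) i := if i == j then (if g j == ord0 then Jg g else set0) else cell (g i).
Definition rect (g : {ffun 'I_n -> 'I_Mb.+1}) := \bigcap_(i in [set: 'I_n]) (W i @^-1` Ag g i).

Lemma n_pos : (0 < n)%N.
Proof. exact: (leq_ltn_trans (leq0n _) (ltn_ord j)). Qed.

Lemma dl_gt0 : 0 < dl.
Proof. by rewrite /dl divr_gt0 // mulr_gt0 // ltr0n n_pos. Qed.

Lemma ndl : n%:R * dl = e / 2.
Proof.
have hn : (n%:R : R) != 0 by rewrite pnatr_eq0 -lt0n n_pos.
rewrite /dl; field; exact: hn.
Qed.

Lemma idx_val y : 0 <= y <= 1 -> (idx y : nat) = Num.truncn (y / dl).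
Proof.
case/andP => y0 y1; have hd := dl_gt0.
have h : (Num.truncn (y / dl) < Mb)%N.
  rewrite truncn_lt_nat; last by rewrite divr_ge0 // ltW.
  apply: le_lt_trans (archi_boundP _); last by rewrite invr_ge0 ltW.
  by rewrite ler_pdivrMr // mulVf ?gt_eqF.
by rewrite /idx inordK // ltnW.
Qed.

Lemma in_cell y : 0 <= y <= 1 -> cell (idx y) y.
Proof.
move=> hy; rewrite /cell /= in_itv /= idx_val //.
have hd := dl_gt0; case/andP: hy => y0 _.
have /andP[h1 h2] := truncn_itv (divr_ge0 y0 (ltW hd)).
by rewrite -ler_pdivlMr // -ltr_pdivrMr // h1 h2.
Qed.

Lemma cell_uniq m m' y : cell m y -> cell m' y -> m = m'.
Proof.
have hd := dl_gt0.
have key p : cell p y -> Num.truncn (y / dl) = p.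
  rewrite /cell /= in_itv /= => /andP[h1 h2]; apply: truncn_def.
  by rewrite ler_pdivlMr // ltr_pdivrMr // h1 h2.
by move=> /key <- /key.
Qed.

Definition gx x : {ffun 'I_n -> 'I_Mb.+1} :=
  [ffun i => if i == j then ord0 else idx (W i x)].

Lemma sum_dl : \sum_(i | i != j) dl <= e / 2.
Proof.
have hd := dl_gt0.
apply: (@le_trans _ _ (\sum_(i < n) dl)).
  rewrite [X in _ <= X](bigD1 j) //=; lra.
by rewrite sumr_const card_ord -[dl *+ n]mulr_natl ndl.
Qed.

Lemma cover x : Ev tau e x -> ~ bad x -> rect (gx x) x.
Proof.
move=> hx nb; have hw := notbad nb.
have hd := dl_gt0.
move=> i _ /=; rewrite /Ag; case: eqVneq => [->|hij].
  have -> : gx x j = ord0 by rewrite /gx ffunE eqxx.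
  rewrite eqxx /Jg /= in_itv /=.
  move: hx; rewrite /Ev /= /aw (bigD1 j) //=.
  set Y := \sum_(i | i != j) _.
  have hY : Yg (gx x) - e / 2 <= Y <= Yg (gx x) + e / 2.
    have hb : forall i0, i0 != j ->
        - dl <= sgn R tau i0 * W i0 x - sgn R tau i0 * (((gx x) i0)%:R * dl) <= dl.
      move=> i0 hi; rewrite /gx ffunE (negbTE hi).
      have := in_cell (hw i0); rewrite /cell /= in_itv /= => /andP[c1 c2].
      rewrite -addn1 natrD mulrDl mul1r in c2.
      by case: (sgn_cases R tau i0) => ->; rewrite ?mul0r ?mul1r ?mulN1r; lra.
    have hs : Y - Yg (gx x) = \sum_(i | i != j)
        (sgn R tau i * W i x - sgn R tau i * (((gx x) i)%:R * dl)).
      by rewrite /Y /Yg sumrB.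
    have l1 : \sum_(i | i != j) (- dl) <= Y - Yg (gx x).
      by rewrite hs; apply: ler_sum => i0 hi; case/andP: (hb i0 hi).
    have l2 : Y - Yg (gx x) <= \sum_(i | i != j) dl.
      by rewrite hs; apply: ler_sum => i0 hi; case/andP: (hb i0 hi).
    move: l1; rewrite sumrN => l1.
    have := sum_dl; lra.
  rewrite /cc /cL.
  have hne : (-1 : R) == 1 = false by apply/eqP; lra.
  have [h0|h0|h0] := sgn_cases R tau j; first by move: hj; rewrite h0 eqxx.
    by rewrite h0 eqxx mul1r => /andP[? ?]; apply/andP; split; lra.
  by rewrite h0 hne mulN1r => /andP[? ?]; apply/andP; split; lra.
rewrite /gx ffunE (negbTE hij); exact: in_cell.
Qed.

Lemma mAg g i : measurable (Ag g i).
Proof.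
rewrite /Ag; case: (i == j); last exact: measurable_itv.
by case: (g j == ord0) => //; exact: measurable_itv.
Qed.

Lemma mrect g : measurable (rect g).
Proof.
apply: fin_bigcap_measurable; first exact: finite_finset.
by move=> i _; apply: mW; exact: mAg.
Qed.

Definition q i (m : 'I_Mb.+1) : R :=
  if i == j then (m == ord0)%:R else pr (W i @^-1` cell m).

Lemma P_rect g : P (rect g) = (\prod_i pr (W i @^-1` Ag g i))%:E.
Proof.
rewrite /rect (@indep (Ag g)); last by move=> i; exact: mAg.
rewrite -prodEFin; apply: eq_bigr => i _; rewrite prE //; apply: mW; exact: mAg.
Qed.

Lemma meas_Jg g : lebesgue_measure (Jg g) = (2 * e)%:E.
Proof.
have he : 0 < 2 * e by rewrite mulr_gt0.
rewrite /Jg lebesgue_measure_itv /= lte_fin ltrDl he -EFinB; congr (_%:E); ring.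
Qed.

Lemma prod_bound g :
  \prod_i pr (W i @^-1` Ag g i) <= 2 * e * phi * \prod_i q i (g i).
Proof.
have phi0 := phi_ge0 n_pos.
have c0 : 0 <= 2 * e * phi by rewrite mulr_ge0 // mulr_ge0 // ltW.
rewrite (bigD1 j) //= [X in _ <= _ * X](bigD1 j) //= mulrA.
apply: ler_pM.
- exact: pr_ge0.
- by apply: prodr_ge0 => i _; exact: pr_ge0.
- rewrite /Ag /q !eqxx; case: (g j == ord0) => /=.
    rewrite mulr1 -lee_fin -prE; last by apply: mW; exact: measurable_itv.
    apply: le_trans (dens_bound j _ phi0) _; first exact: measurable_itv.
    by rewrite meas_Jg -EFinM lee_fin mulrC.
  by rewrite mulr0 preimage_set0 /pr measure0.
- by apply: ler_prod => i hi; rewrite /Ag /q (negbTE hi) pr_ge0 lexx.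
Qed.

Lemma sum_cells i : \sum_(m < Mb.+1) pr (W i @^-1` cell m) <= 1.
Proof.
have mc m : measurable (W i @^-1` cell m) by apply: mW; exact: measurable_itv.
rewrite -lee_fin -sumEFin.
under eq_bigr do rewrite -prE //.
rewrite -measure_bigsetU_ord //.
  by apply: probability_le1; apply: bigsetU_measurable.
move=> m m' _ _ [y [h1 h2]]; apply: val_inj; exact: cell_uniq h1 h2.
Qed.

Lemma sum_q : \sum_(g : {ffun 'I_n -> 'I_Mb.+1}) \prod_i q i (g i) <= 1.
Proof.
rewrite -bigA_distr_bigA /=; apply: prodr_ile1 => i _.
rewrite /q; case: (i == j).
  rewrite (bigD1 ord0) //= big1 ?addr0 ?ler01 ?lexx // => m hm.
  by rewrite (negbTE hm).
by rewrite sum_cells andbT; apply: sumr_ge0 => m _; exact: pr_ge0.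
Qed.

Lemma P_Ev_grid : (P (Ev tau e) <= (2 * e * phi)%:E)%E.
Proof.
have phi0 := phi_ge0 n_pos.
have c0 : 0 <= 2 * e * phi by rewrite mulr_ge0 // mulr_ge0 // ltW.
have mU : measurable (\big[setU/set0]_(g <- index_enum {ffun 'I_n -> 'I_Mb.+1}) rect g).
  by apply: bigsetU_measurable => g _; exact: mrect.
have sub : Ev tau e `<=` bad `|` \big[setU/set0]_(g <- index_enum {ffun 'I_n -> 'I_Mb.+1}) rect g.
  move=> x hx; have [hb|nb] := pselect (bad x); [by left| right].
  apply: mem_bigsetU; exists (gx x); [by rewrite mem_index_enum| exact: cover].
apply: le_trans (le_measure _ _ _ sub) _; rewrite ?inE.
- exact: mEv.
- exact: measurableU mbad mU.
apply: le_trans (measureU2 _ mbad mU) _.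
have hb0 : (P bad <= 0)%E by rewrite P_bad.
apply: le_trans (leeD2r _ hb0) _; rewrite add0e.
apply: le_trans (union_bound _ mrect) _.
under eq_bigr do rewrite P_rect.
rewrite sumEFin lee_fin.
apply: le_trans (ler_sum _ (fun g _ => prod_bound g)) _.
rewrite -mulr_sumr -[X in _ <= X]mulr1; apply: ler_wpM2l => //.
exact: sum_q.
Qed.

End Grid.

Lemma P_Ev k (tau : {ffun 'I_k -> 'I_n * option bool}) e : (0 < n)%N -> 0 < e ->
  (P (Ev tau e) <= (2 * e * phi)%:E)%E.
Proof.
move=> n0 e0; have [[j hj]|h] := pselect (exists j, sgn R tau j != 0).
  exact: P_Ev_grid e0 hj.
have -> : Ev tau e = set0.
  apply/seteqP; split => x //=; rewrite /Ev /= /aw big1 ?ltxx //= => i _.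
  have : sgn R tau i == 0 by apply: contrapT => hi; apply: h; exists i; apply/negP.
  by move/eqP => ->; rewrite mul0r.
by rewrite measure0 lee_fin; have := phi_ge0 n0; have := e0; nra.
Qed.

End Prob.

End BB.

Lemma harm (R : realType) m : \sum_(t < 2 ^ m) ((t.+1)%:R : R)^-1 <= (m.+1)%:R.
Proof.
elim: m => [|m IH]; first by rewrite expn0 big_ord1 invr1.
rewrite expnS mul2n -addnn big_split_ord /=.
have h2 : \sum_(t < 2 ^ m) ((2 ^ m + t).+1%:R : R)^-1 <= 1.
  have hp : (0 : R) < (2 ^ m)%:R by rewrite ltr0n expn_gt0.
  apply: (@le_trans _ _ (\sum_(t < 2 ^ m) ((2 ^ m)%:R : R)^-1)).
    apply: ler_sum => t _; rewrite lef_pV2 ?posrE ?ltr0n ?expn_gt0 //. rewrite (ler_nat R); by rewrite -addnS leq_addr.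
  by rewrite sumr_const card_ord -(mulr_natr ((2 ^ m)%:R^-1 : R) (2 ^ m)) mulVf // gt_eqF.
rewrite -(addn1 m.+1) natrD; lra.
Qed.

Lemma card_tau n k : #|{ffun 'I_k -> 'I_n * option bool}| = ((3 * n) ^ k)%N.
Proof. by rewrite card_ffun card_prod card_option card_bool !card_ord mulnC. Qed.

Lemma le_integralT_nonmeas d (T : measurableType d) (R : realType)
  (mu : {measure set T -> \bar R}) (f g : T -> \bar R) :
  (forall x, (0 <= f x)%E) -> (forall x, (f x <= g x)%E) ->
  (\int[mu]_(x in [set: T]) f x <= \int[mu]_(x in [set: T]) g x)%E.
Proof.
move=> f0 fg.
have g0 : forall x, (0 <= g x)%E by move=> x; exact: le_trans (fg x).
rewrite ge0_integralTE // ge0_integralTE //.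
apply: le_ereal_sup => _ [h hf <-]; exists h => //= x.
exact: le_trans (fg x).
Qed.

Section Main.
Local Open Scope classical_set_scope.
Context (pb : problem) (R : realType) (d : measure_display) (T : measurableType d)
  (P : probability T R) (B : finType) (n q k : nat) (C : 'I_n -> {set B}) (phi : R)
  (W : 'I_n -> {RV P >-> R}) (f : 'I_n -> R -> R).
Hypotheses (indep : mutually_independent W)
  (dens : forall i, has_density_01 (W i) (f i) phi).

Definition Xit x := max_iterations pb q C k (fun i => W i x).
Definition EvT (t : nat) (tau : {ffun 'I_k -> 'I_n * option bool}) :=
  Ev W tau (n%:R / (t.+1)%:R).

Lemma indic_ge0' (A : set T) x : (0 : R) <= \1_A x.
Proof. by rewrite indicE ler0n. Qed.

Lemma pointwise x :
  (Xit x)%:R <= \sum_(t < 2 ^ n) (\1_(bad W) x +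
      \sum_(tau : {ffun 'I_k -> 'I_n * option bool}) \1_(EvT t tau) x :> R).
Proof.
have hX := max_it_le k pb q C (fun i => W i x).
have ge0 t : 0 <= \sum_(tau : {ffun 'I_k -> 'I_n * option bool}) \1_(EvT t tau) x :> R.
  by apply: sumr_ge0 => tau _; exact: indic_ge0'.
have [hb|hb] := pselect (bad W x).
  apply: (@le_trans _ _ (\sum_(t < 2 ^ n) (1:R))).
    by rewrite sumr_const card_ord ler_nat.
  apply: ler_sum => t _; rewrite indicE mem_set //; rewrite /= ?mulr1n; have := ge0 t; lra.
have nb := notbad hb.
have -> : (Xit x)%:R = \sum_(t < Xit x) (1:R) by rewrite sumr_const card_ord.
rewrite (big_ord_widen _ (fun _ => (1:R)) hX) big_mkcond /=.
apply: ler_sum => t _; case: ifP => ht; last first.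
  by apply: addr_ge0; [exact: indic_ge0'|exact: ge0].
have [tau /andP[h1 h2]] := gap_exists nb (ltn0Sn t) ht.
rewrite (bigD1 tau) //= [\1_(EvT t tau) x]indicE mem_set /= ?mulr1n; last by rewrite /EvT /Ev /= h1 h2.
have : 0 <= \sum_(i | i != tau) \1_(EvT t i) x :> R by apply: sumr_ge0 => i _; exact: indic_ge0'.
have := indic_ge0' (bad W) x; lra.
Qed.

Lemma harm_bound :
  (0 < n)%N ->
  \sum_(t < 2 ^ n) (((3 * n) ^ k)%N%:R * (2 * (n%:R / (t.+1)%:R) * phi)) <=
  (4 * 3 ^ k * n ^ (k + 2))%:R * phi.
Proof.
move=> n0; have phi0 := phi_ge0 dens n0.
set N : R := n%:R.
have N1 : 1 <= N by rewrite /N ler1n.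
set K : R := ((3 * n) ^ k)%N%:R * 2 * N * phi.
have K0 : 0 <= K by rewrite /K !mulr_ge0 // ler0n.
have -> : \sum_(t < 2 ^ n) (((3 * n) ^ k)%N%:R * (2 * (N / (t.+1)%:R) * phi)) =
    K * \sum_(t < 2 ^ n) ((t.+1)%:R)^-1.
  by rewrite mulr_sumr; apply: eq_bigr => t _; rewrite /K; ring.
apply: (@le_trans _ _ (K * (2 * N))).
  apply: ler_wpM2l => //; apply: le_trans (harm R n) _.
  by rewrite -/N -addn1 natrD -/N; lra.
rewrite /K !(natrX, natrM) exprMn exprD -/N le_eqVlt; apply/orP; left; apply/eqP; ring.
Qed.

Lemma integral_bound : (0 < n)%N ->
  (\int[P]_(x in [set: T]) ((Xit x)%:R : R)%:E <=
     ((4 * 3 ^ k * n ^ (k + 2))%:R * phi)%:E)%E.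
Proof.
move=> n0; have phi0 := phi_ge0 dens n0.
pose G x := \sum_(t < 2 ^ n) ((\1_(bad W) x : R)%:E +
   \sum_(tau : {ffun 'I_k -> 'I_n * option bool}) (\1_(EvT t tau) x : R)%:E).
have mb : measurable_fun setT (fun x => (\1_(bad W) x : R)%:E).
  by apply/measurable_EFinP; apply: measurable_indic; exact: mbad.
have me t tau : measurable_fun setT (fun x => (\1_(EvT t tau) x : R)%:E).
  by apply/measurable_EFinP; apply: measurable_indic; exact: mEv.
have ms t : measurable_fun setT (fun x =>
    \sum_(tau : {ffun 'I_k -> 'I_n * option bool}) (\1_(EvT t tau) x : R)%:E)%E.
  by apply: emeasurable_sum => tau; exact: me.
have ge0s t x : (0 <= \sum_(tau : {ffun 'I_k -> 'I_n * option bool})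
    (\1_(EvT t tau) x : R)%:E)%E.
  by apply: sume_ge0 => tau _; rewrite lee_fin indic_ge0'.
have H : (\int[P]_(x in [set: T]) ((Xit x)%:R : R)%:E <= \int[P]_(x in [set: T]) G x)%E.
  apply: le_integralT_nonmeas => x; first by rewrite lee_fin ler0n.
  have -> : G x = (\sum_(t < 2 ^ n) (\1_(bad W) x +
      \sum_(tau : {ffun 'I_k -> 'I_n * option bool}) \1_(EvT t tau) x : R))%:E.
    by rewrite /G -sumEFin; apply: eq_bigr => t _; rewrite EFinD sumEFin.
  by rewrite lee_fin; exact: pointwise.
apply: le_trans H _.
rewrite /G ge0_integral_sum //; last first.
  - by move=> t x _; apply: adde_ge0 => //; rewrite lee_fin indic_ge0'.
  - by move=> t; apply: emeasurable_funD => //; exact: ms.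
have H2 := harm_bound n0; rewrite -lee_fin in H2; apply: le_trans _ H2.
rewrite -sumEFin; apply: lee_sum => t _.
rewrite ge0_integralD //.
rewrite integral_indic //; last exact: mbad.
rewrite setIT.
have hb0 : (P (bad W) <= 0)%E by rewrite (P_bad dens).
apply: le_trans (leeD2r _ hb0) _; rewrite add0e.
rewrite ge0_integral_sum //.
have H3 : (\sum_(tau : {ffun 'I_k -> 'I_n * option bool})
    \int[P]_(x in [set: T]) (\1_(EvT t tau) x : R)%:E <=
   \sum_(tau : {ffun 'I_k -> 'I_n * option bool})
   (2 * (n%:R / (t.+1)%:R) * phi)%:E)%E.
  apply: lee_sum => tau _; rewrite integral_indic //; last exact: mEv.
  rewrite setIT; apply: P_Ev => //.
  by rewrite divr_gt0 // ltr0n.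
apply: le_trans H3 _.
by rewrite sumEFin sumr_const card_tau lee_fin [X in _ <= X]mulr_natl.
Qed.

End Main.


End Aux.
Import Aux.

Theorem mainTheorem15 :
  exists c : nat,
  forall (pb : problem) (R : realType) (d : measure_display)
    (T : measurableType d) (P : probability T R)
    (B : finType) (n q k : nat) (C : 'I_n -> {set B}) (phi : R)
    (W : 'I_n -> {RV P >-> R}) (f : 'I_n -> R -> R),
    injective C ->
    (pb = X3C -> #|B| = (3 * q)%N /\ forall i, #|C i| = 3%N) ->
    mutually_independent W ->
    (forall i, has_density_01 (W i) (f i) phi) ->
    (\int[P]_(x in [set: T])
        ((max_iterations pb q C k (fun i => W i x))%:R : R)%:E
      <= ((c * 3 ^ k * n ^ (k + 2))%:R * phi)%:E)%E.
Proof.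
exists 4%N => pb R d T P B n q k C phi W f _ _ indep dens.
case: (posnP n) => [n0|n0]; last exact: (integral_bound pb q k C indep dens n0).
subst n.
have X0 x : max_iterations pb q C k (fun i => W i x) = 0%N.
  apply/eqP; rewrite -leqn0; apply: contraT; rewrite -ltnNge => h.
  have hw : forall i : 'I_0, (0 <= W i x <= 1)%R by case.
  have [tau /andP[h1 _]] := gap_exists hw (ltn0Sn 0) h.
  by move: h1; rewrite /aw big_ord0 ltxx.
rewrite integral0_eq; last by move=> x _; rewrite X0.
by rewrite exp0n ?addn2 // muln0 mul0r.
Qed.
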